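(* Under the assumptions below, suppose $\mu$ is sufficiently large. The data $(X_i,U_i,\mathcal{E}_i)$ are informative for the cooperative output regulation problem if and only if, for every $i\in\{1,\dots,N\}$, there exists a right inverse $X_i^{+}$ of $X_i$ such that $(X_i\mathcal{D}_{11}-E_iV)X_i^{+}$ is stable, and the data-driven regulator equations $(X_i\mathcal{D}_{11}-E_iV)M_i=X_iM_iS-E_i$, $(\mathcal{E}_i-F_iV)M_i=-F_i$ have a solution $M_i$. Moreover, $K_{2i}$ can be computed as $K_{2i}=(U_i-K_{1i}X_i)M_i$.
   Context: Leader–follower multi-agent system with $N$ followers. Follower $i$: $\dot x_i=A_ix_i+B_iu_i+E_iv$, $e_i=C_ix_i+D_iu_i+F_iv$, with $x_i\in\mathbb{R}^{n_i}$, $e_i\in\mathbb{R}^{p}$; exosystem $\dot v=Sv$, $v\in\mathbb{R}^q$. $A_i,B_i,C_i,D_i$ unknown; $E_i,F_i,S$ known. Distributed controller: $u_i=K_{1i}x_i+K_{2i}\eta_i$, $\dot\eta_i=S\eta_i+\mu[\sum_j a_{ij}(\eta_j-\eta_i)+a_{i0}(v-\eta_i)]$, with $K_{1i}=U_iX_i^{+}$. Data: signals expanded in an orthogonal polynomial basis truncated at degree $N$; $X_i,U_i,\mathcal{E}_i,V$ are the matrices of the first $N+1$ coefficient vectors of $x_i,u_i,e_i,v$, and $\mathcal{D}_{11}$ is the leading $(N+1)\times(N+1)$ block of the basis differentiation matrix. Exact data: $X_i\mathcal{D}_{11}=A_iX_i+B_iU_i+E_iV$, $\mathcal{E}_i=C_iX_i+D_iU_i+F_iV$.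 The data are informative for cooperative output regulation if every system consistent with the data admits gains making the closed-loop matrix Hurwitz and the regulator equations $\Pi_iS=A_i\Pi_i+B_i\Gamma_i+E_i$, $0=C_i\Pi_i+D_i\Gamma_i+F_i$ (with $\Gamma_i=K_{1i}\Pi_i+K_{2i}$) solvable, so that $e(t)\to0$. Assumptions: $S$ has no eigenvalues with negative real part; the graph is unknown but contains a directed spanning tree rooted at the leader; nonzero Laplacian entries satisfy $\varepsilon_1\le|\mathcal{L}_{ij}|\le\varepsilon_2$. *)

(* Defs.v *)
(* Real scalars: an arbitrary real closed field R
   (e.g. the reals); eigenvalues live in its algebraic closure R[i]. *)
From HB Require Import structures.
From mathcomp Require Import all_boot all_order all_algebra.
From mathcomp Require Import complex.
Set Implicit Arguments. Unset Strict Implicit. Unset Printing Implicit Defensive.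
Import Order.TTheory GRing.Theory Num.Theory.
Local Open Scope ring_scope.

Definition is_eigenvalue (R : rcfType) (n : nat) (A : 'M[R]_n) (z : R[i]) :=
  root (map_poly (real_complex R) (char_poly A)) z.

(** Hurwitz (= stable, continuous time): every eigenvalue has negative real part. *)
Definition hurwitz (R : rcfType) (n : nat) (A : 'M[R]_n) :=
  forall z : R[i], is_eigenvalue A z -> complex.Re z < 0.

Definition no_stable_eig (R : rcfType) (n : nat) (A : 'M[R]_n) :=
  forall z : R[i], is_eigenvalue A z -> 0 <= complex.Re z.

(** Communication graph on N+1 nodes, node 0 = leader, node (lift ord0 i)
    = follower i.  [Ad k l] = a_{kl} is the weight with which node k uses
    the information of node l. *)
Definition aug_laplacian (R : rcfType) (N : nat) (Ad : 'M[R]_N.+1) : 'M[R]_N.+1 :=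
  \matrix_(k, l) ((k == l)%:R * (\sum_(l' < N.+1) Ad k l') - Ad k l).

(** Admissible (unknown) graphs: nonnegative weights, no self loops,
    the leader listens to nobody, a directed spanning tree rooted at the
    leader, and all nonzero Laplacian entries have modulus in [eps1, eps2]. *)
Definition admissible_graph (R : rcfType) (N : nat) (eps1 eps2 : R)
    (Ad : 'M[R]_N.+1) : Prop :=
  [/\ (forall k l, 0 <= Ad k l),
      (forall k, Ad k k = 0),
      (forall l, Ad ord0 l = 0),
      (forall k, connect (fun u v : 'I_N.+1 => 0 < Ad v u) ord0 k) &
      (forall k l, aug_laplacian Ad k l != 0 ->
         eps1 <= `|aug_laplacian Ad k l| <= eps2)].

(** H = L_followers + diag(a_{i0}) (the follower block of the augmented Laplacian). *)
Definition Hmat (R : rcfType) (N : nat) (Ad : 'M[R]_N.+1) : 'M[R]_N :=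
  \matrix_(i, j) aug_laplacian Ad (lift ord0 i) (lift ord0 j).

(** Closed-loop matrix of col(x_1..x_N, eta_1..eta_N) under
    u_i = K1_i x_i + K2_i eta_i,
    eta_i' = S eta_i + mu [sum_j a_ij (eta_j - eta_i) + a_i0 (v - eta_i)]. *)
Definition closed_loop (R : rcfType) (N q : nat) (n m : 'I_N -> nat)
    (A : forall i, 'M[R]_(n i)) (B : forall i, 'M[R]_(n i, m i))
    (K1 : forall i, 'M[R]_(m i, n i)) (K2 : forall i, 'M[R]_(m i, q))
    (S : 'M[R]_q) (mu : R) (Ad : 'M[R]_N.+1)
  : 'M[R]_((\sum_(i < N) n i) + (\sum_(i < N) q)) :=
  block_mx
    (\mxdiag_(i < N) (A i + B i *m K1 i))
    (\mxblock_(i < N, j < N) (if i == j then B i *m K2 i else 0 : 'M[R]_(n i, q)))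
    0
    (\mxblock_(i < N, j < N)
        ((i == j)%:R *: S - (mu * Hmat Ad i j) *: (1%:M : 'M[R]_q))).

Definition consistent (R : rcfType) (n m p q T : nat)
    (X : 'M[R]_(n, T)) (U : 'M[R]_(m, T)) (Ed : 'M[R]_(p, T))
    (V : 'M[R]_(q, T)) (D11 : 'M[R]_T) (E : 'M[R]_(n, q)) (F : 'M[R]_(p, q))
    (A : 'M[R]_n) (B : 'M[R]_(n, m)) (C : 'M[R]_(p, n)) (D : 'M[R]_(p, m)) :=
  X *m D11 = A *m X + B *m U + E *m V /\ Ed = C *m X + D *m U + F *m V.

Definition regulator_solvable (R : rcfType) (n m p q : nat)
    (A : 'M[R]_n) (B : 'M[R]_(n, m)) (C : 'M[R]_(p, n)) (D : 'M[R]_(p, m))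
    (E : 'M[R]_(n, q)) (F : 'M[R]_(p, q)) (S : 'M[R]_q)
    (K1 : 'M[R]_(m, n)) (K2 : 'M[R]_(m, q)) :=
  exists Pi : 'M[R]_(n, q),
    let Gamma := K1 *m Pi + K2 in
    Pi *m S = A *m Pi + B *m Gamma + E /\ 0 = C *m Pi + D *m Gamma + F.

Definition gains_work (R : rcfType) (N p q T : nat) (n m : 'I_N -> nat)
    (X : forall i, 'M[R]_(n i, T)) (U : forall i, 'M[R]_(m i, T))
    (Ed : forall i, 'M[R]_(p, T)) (V : 'M[R]_(q, T)) (D11 : 'M[R]_T)
    (E : forall i, 'M[R]_(n i, q)) (F : forall i, 'M[R]_(p, q)) (S : 'M[R]_q)
    (eps1 eps2 mu : R)
    (Xp : forall i, 'M[R]_(T, n i)) (K2 : forall i, 'M[R]_(m i, q)) : Prop :=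
  (forall i, X i *m Xp i = 1%:M) /\
  forall (Ad : 'M[R]_N.+1)
         (A : forall i, 'M[R]_(n i)) (B : forall i, 'M[R]_(n i, m i))
         (C : forall i, 'M[R]_(p, n i)) (D : forall i, 'M[R]_(p, m i)),
    admissible_graph eps1 eps2 Ad ->
    (forall i, consistent (X i) (U i) (Ed i) V D11 (E i) (F i) (A i) (B i) (C i) (D i)) ->
    hurwitz (closed_loop A B (fun i => U i *m Xp i) K2 S mu Ad) /\
    (forall i, regulator_solvable (A i) (B i) (C i) (D i) (E i) (F i) S
                 (U i *m Xp i) (K2 i)).

Definition informative (R : rcfType) (N p q T : nat) (n m : 'I_N -> nat)
    (X : forall i, 'M[R]_(n i, T)) (U : forall i, 'M[R]_(m i, T))
    (Ed : forall i, 'M[R]_(p, T)) (V : 'M[R]_(q, T)) (D11 : 'M[R]_T)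
    (E : forall i, 'M[R]_(n i, q)) (F : forall i, 'M[R]_(p, q)) (S : 'M[R]_q)
    (eps1 eps2 mu : R) : Prop :=
  exists (Xp : forall i, 'M[R]_(T, n i)) (K2 : forall i, 'M[R]_(m i, q)),
    gains_work X U Ed V D11 E F S eps1 eps2 mu Xp K2.

(* Main.v *)
Require Import Defs.
From HB Require Import structures.
From mathcomp Require Import all_boot all_order all_algebra.
From mathcomp Require Import complex.
From mathcomp Require Import ring lra.
Import Order.TTheory GRing.Theory Num.Theory.
Local Open Scope ring_scope.
Import ComplexField.Normc.
Set Implicit Arguments. Unset Strict Implicit. Unset Printing Implicit Defensive.

Section A.
Variable R : rcfType.
Local Notation C := (R[i]).
Local Notation rc := (real_complex R).

Lemma char_poly_tr (F : fieldType) n (A : 'M[F]_n) : char_poly A^T = char_poly A.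
Proof.
rewrite /char_poly -det_tr; congr (\det _); apply/matrixP=> i j; rewrite !mxE eq_sym //.
Qed.

Definition reig n (A : 'M[R]_n) (z : C) :=
  exists2 w : 'cV[C]_n, map_mx rc A *m w = z *: w & w != 0.

Lemma eigP n (A : 'M[R]_n) z : is_eigenvalue A z <-> reig A z.
Proof.
rewrite /is_eigenvalue map_char_poly -char_poly_tr -eigenvalue_root_char /reig.
split.
  move/(@eigenvalueP C n)=> [v Hv vn0].
  exists (v^T); last by rewrite trmx_eq0.
  by apply: trmx_inj; rewrite trmx_mul trmxK Hv linearZ /= trmxK.
move=> [w Hw wn0]; apply/(@eigenvalueP C n); exists w^T; last by rewrite trmx_eq0.
by rewrite -trmx_mul Hw linearZ.
Qed.


Lemma map_mxblock (N : nat) (p_ : 'I_N -> nat) (q_ : 'I_N -> nat)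
  (B : forall i j, 'M[R]_(p_ i, q_ j)) :
  map_mx rc (\mxblock_(i, j) B i j) = \mxblock_(i, j) map_mx rc (B i j).
Proof. by apply/matrixP=> a b; rewrite !mxE. Qed.

Lemma map_mxdiag (N : nat) (p_ : 'I_N -> nat) (B : forall i, 'M[R]_(p_ i)) :
  map_mx rc (\mxdiag_i B i) = \mxdiag_i map_mx rc (B i).
Proof.
rewrite /mxdiag map_mxblock; apply: eq_mxblock => i j.
case: eqVneq => [e|_]; last by rewrite map_mx0.
by subst j; rewrite !conform_mx_id.
Qed.

Lemma reig_block_l n1 n2 (P : 'M[R]_n1) Q (Rr : 'M[R]_n2) z :
  reig P z -> reig (block_mx P Q 0 Rr) z.
Proof.
move=> [w Hw wn0]; exists (col_mx w 0).
  by rewrite map_block_mx mul_block_col !mulmx0 map_mx0 mul0mx !addr0 Hw scale_col_mx scaler0.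
apply/negP => /eqP; rewrite -col_mx0 => /eq_col_mx [w0 _].
by rewrite w0 eqxx in wn0.
Qed.

Lemma reig_block n1 n2 (P : 'M[R]_n1) Q (Rr : 'M[R]_n2) z :
  reig (block_mx P Q 0 Rr) z -> reig P z \/ reig Rr z.
Proof.
move=> [w Hw wn0]; rewrite -[w]vsubmxK in Hw wn0.
move: Hw; rewrite map_block_mx mul_block_col map_mx0 mul0mx add0r scale_col_mx.
move/eq_col_mx => [H1 H2].
have [d0|dn0] := eqVneq (dsubmx w) 0.
  left; exists (usubmx w).
    by move: H1; rewrite d0 mulmx0 addr0.
  apply/negP => /eqP u0; by rewrite u0 d0 col_mx0 eqxx in wn0.
by right; exists (dsubmx w).
Qed.

Lemma scale_mxcol (N : nat) (p_ : 'I_N -> nat) m (a : C) (Cc : forall i, 'M[C]_(p_ i, m)) :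
  a *: \mxcol_i Cc i = \mxcol_i (a *: Cc i).
Proof. by apply/matrixP=> x y; rewrite !mxE. Qed.

Lemma reig_diag_in (N : nat) (p_ : 'I_N -> nat) (B : forall i, 'M[R]_(p_ i)) i z :
  reig (B i) z -> reig (\mxdiag_i B i) z.
Proof.
move=> [w Hw wn0].
exists (\mxcol_k (if k == i then conform_mx 0 w else 0)).
  rewrite map_mxdiag /mxdiag mul_mxblock_mxrow scale_mxcol.
  apply: eq_mxcol => k.
  rewrite (bigD1 k) //= eqxx conform_mx_id big1 ?addr0; last first.
    by move=> j; rewrite eq_sym => /negbTE ->; rewrite mul0mx.
  case: eqVneq => [e|_]; last by rewrite mulmx0 scaler0.
  by subst k; rewrite conform_mx_id.
apply/negP => /eqP/(congr1 (fun M => submxcol M i)).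
rewrite mxcolK eqxx conform_mx_id submxcol0 => w0.
by rewrite w0 eqxx in wn0.
Qed.

Lemma reig_diag_out (N : nat) (p_ : 'I_N -> nat) (B : forall i, 'M[R]_(p_ i)) z :
  reig (\mxdiag_i B i) z -> exists i, reig (B i) z.
Proof.
move=> [w Hw wn0]; rewrite -[w]submxcolK in Hw wn0.
move: Hw; rewrite map_mxdiag /mxdiag mul_mxblock_mxrow scale_mxcol.
move/eq_mxcolP => H.
have [i wi] : exists i, submxcol w i != 0.
  apply/existsP; apply: contraR wn0; rewrite negb_exists => /forallP H0.
  apply/eqP; rewrite -(mxcol0 (p_ := p_)); apply: eq_mxcol => i.
  by move: (H0 i); rewrite negbK => /eqP.
exists i; exists (submxcol w i) => //.
move: (H i); rewrite (bigD1 i) //= eqxx conform_mx_id big1 ?addr0 //.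
by move=> j; rewrite eq_sym => /negbTE ->; rewrite mul0mx.
Qed.

End A.

Section G.
Variable R : rcfType.
Variable N : nat.
Variable Ad : 'M[R]_N.+1.

Fixpoint lvl (k : nat) : {set 'I_N.+1} :=
  if k is k'.+1 then lvl k' :|: [set a | [exists b in lvl k', 0 < Ad a b]]
  else [set ord0].

Lemma lvl_mono k k' a : (k <= k')%N -> a \in lvl k -> a \in lvl k'.
Proof.
move=> /subnK <-; elim: (k' - k)%N => //= j IH /IH.
by rewrite in_setU => ->.
Qed.

Lemma lvl_step k a b : b \in lvl k -> 0 < Ad a b -> a \in lvl k.+1.
Proof.
move=> bk ab; rewrite /= in_setU; apply/orP; right; rewrite inE.
by apply/existsP; exists b; rewrite bk ab.
Qed.

Lemma lvl_path p x k : x \in lvl k -> path (fun u v => 0 < Ad v u) x p ->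
  last x p \in lvl (k + size p).
Proof.
elim: p x k => [|y p IH] x k /=; first by rewrite addn0.
move=> xk /andP [xy yp]; rewrite addnS -addSn; apply: IH yp.
exact: lvl_step xk xy.
Qed.

Hypothesis conn : forall a, connect (fun u v : 'I_N.+1 => 0 < Ad v u) ord0 a.

Lemma lvl_all a : a \in lvl N.
Proof.
move/connectP: (conn a) => [p pth ->].
case: (shortenP pth) => p' pth' up' _.
apply: (@lvl_mono (size p')).
  have := max_card (mem (ord0 :: p')).
  by rewrite (card_uniqP up') card_ord.
have := @lvl_path p' ord0 0 (set11 _) pth'.
by rewrite add0n.
Qed.

Definition dep a := find (fun k => a \in lvl k) (iota 0 N.+1).

Lemma dep_has a : has (fun k => a \in lvl k) (iota 0 N.+1).
Proof. apply/hasP; exists N; last exact: lvl_all. by rewrite mem_iota leq0n add0n ltnSn. Qed.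

Lemma dep_le a : (dep a <= N)%N.
Proof. by have := dep_has a; rewrite has_find size_iota. Qed.

Lemma dep_in a : a \in lvl (dep a).
Proof.
have := nth_find 0 (dep_has a).
by rewrite nth_iota ?add0n // ltnS dep_le.
Qed.

Lemma dep_min a k : (k < dep a)%N -> a \notin lvl k.
Proof.
move=> kd; have := before_find 0 kd.
rewrite nth_iota ?add0n => [->//|].
exact: (leq_trans kd (leqW (dep_le a))).
Qed.

Lemma dep0 : dep ord0 = 0%N.
Proof.
case E: (dep ord0) => [//|k].
have := @dep_min ord0 0; rewrite E /= inE eqxx => /(_ isT) //.
Qed.

Lemma dep_parent a : a != ord0 -> exists2 b, 0 < Ad a b & (dep b < dep a)%N.
Proof.
move=> an0; have := dep_in a; case E: (dep a) => [|k].
  by rewrite /= inE (negbTE an0).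
rewrite /= in_setU => /orP [ak|].
  by have := @dep_min a k; rewrite E ltnSn ak => /(_ isT).
rewrite inE => /existsP [b /andP [bk ab]]; exists b => //.
rewrite ltnS leqNgt; apply/negP => /dep_min; by rewrite bk.
Qed.

End G.

Section G2.
Variable R : rcfType.
Variable N : nat.
Variables eps1 eps2 : R.
Hypothesis e1 : 0 < eps1.
Hypothesis e12 : eps1 <= eps2.

Lemma Ad_bounds (Ad : 'M[R]_N.+1) (adm : admissible_graph eps1 eps2 Ad) a l :
  (0 <= Ad a l <= eps2) /\ (0 < Ad a l -> eps1 <= Ad a l).
Proof.
case: adm => nonneg diag0 _ _ lap.
case: (eqVneq (Ad a l) 0) => [->| nz].
  by rewrite lexx ltxx (le_trans (ltW e1) e12).
have al : a != l by apply: contraNneq nz => ->; rewrite diag0.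
have lapE : aug_laplacian Ad a l = - Ad a l.
  by rewrite mxE (negbTE al) mul0r sub0r.
have := lap a l; rewrite lapE oppr_eq0 nz normrN ger0_norm ?nonneg //.
by move=> /(_ isT) /andP [h1 h2]; rewrite h2 andbT; split=> // _; exact: nonneg.
Qed.

Definition rr := eps1 / (4 * (eps1 + (N.+1)%:R * eps2)).
Definition cc := eps1 / 2 * rr ^+ N.

Lemma rr_gt0 : 0 < rr.
Proof.
rewrite /rr divr_gt0 // mulr_gt0 // ltr_wpDr // mulr_ge0 //.
exact: le_trans (ltW e1) e12.
Qed.

Lemma rr_eq : rr * (eps1 + (N.+1)%:R * eps2) = eps1 / 4.
Proof.
have h : eps1 + (N.+1)%:R * eps2 != 0.
  rewrite gt_eqF // ltr_wpDr // mulr_ge0 //; exact: le_trans (ltW e1) e12.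
rewrite /rr; field; by rewrite (addrC 1) natr1.
Qed.

Lemma rr_lt1 : rr < 1.
Proof.
have h : 0 <= (N.+1)%:R * eps2 by rewrite mulr_ge0 //; exact: le_trans (ltW e1) e12.
rewrite /rr ltr_pdivrMr ?mul1r; last by rewrite mulr_gt0 // ltr_wpDr.
move: h; generalize ((N.+1)%:R * eps2) => X h; have := e1; lra.
Qed.

Lemma cc_gt0 : 0 < cc.
Proof. by rewrite /cc mulr_gt0 ?exprn_gt0 ?rr_gt0 ?divr_gt0. Qed.

Lemma graph_bound (Ad : 'M[R]_N.+1) : admissible_graph eps1 eps2 Ad ->
  exists g : 'I_N.+1 -> R, g ord0 = 0 /\ forall a, a != ord0 ->
    [/\ 0 < g a, g a <= 1 & cc <= \sum_l Ad a l * (g a - g l)].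
Proof.
move=> adm; have adm' := adm; case: adm' => nonneg _ _ conn _.
pose g a := 1 - rr ^+ dep Ad a.
exists g; split; first by rewrite /g dep0 // expr0 subrr.
move=> a an0.
have r0 := rr_gt0; have r1 := rr_lt1.
have [b ab dba] := dep_parent conn an0.
move: (dep_le conn a) dba; rewrite /g.
case E: (dep Ad a) => [//|k] kN dbk.
have rk0 : 0 <= rr ^+ k by rewrite exprn_ge0 // ltW.
have rkk : rr ^+ k.+1 = rr * rr ^+ k by rewrite exprS.
have rkN : rr ^+ N <= rr ^+ k by apply: ler_wiXn2l; rewrite ?ltW // ltnW.
have rbk : rr ^+ k <= rr ^+ dep Ad b by apply: ler_wiXn2l; rewrite ?ltW // -ltnS.
split.
- have rk1 : rr ^+ k <= 1 by rewrite exprn_ile1 // ltW.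
  rewrite subr_gt0 rkk; nra.
- rewrite lerBlDr lerDl exprn_ge0 // ltW //.
have term l : Ad a l * ((1 - rr ^+ k.+1) - (1 - rr ^+ dep Ad l)) >=
    - (eps2 * rr ^+ k.+1) + (l == b)%:R * (eps1 * (rr ^+ k - rr ^+ k.+1) + eps2 * rr ^+ k.+1).
  have [/andP [h0 h1] h2] := Ad_bounds adm a l.
  have rl0 : 0 <= rr ^+ dep Ad l by rewrite exprn_ge0 // ltW.
  have rk10 : 0 <= rr ^+ k.+1 by rewrite exprn_ge0 // ltW.
  case: (eqVneq l b) => [e|_]; last first. rewrite mul0r addr0; move: h0 h1 rl0 rk10; generalize (Ad a l) (rr ^+ dep Ad l) (rr ^+ k.+1) => A x y hA1 hA2 hx hy; clear -hA1 hA2 hx hy; nra.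
  subst l; have := h2 ab; rewrite mul1r.
  have hyk : rr ^+ k.+1 <= rr ^+ k by rewrite rkk; nra.
  move: h0 rbk hyk; generalize (Ad a b) (rr ^+ dep Ad b) (rr ^+ k.+1) (rr ^+ k) => A x y z hA hx hy hA1.
  clear -hA hx hy hA1; nra.
apply: le_trans (ler_sum _ (fun l _ => term l)).
rewrite big_split /= sumr_const card_ord.
rewrite (bigD1 b) //= eqxx mul1r big1 ?addr0; last by move=> l /negbTE ->; rewrite mul0r.
rewrite /cc mulNrn -[eps2 * _ *+ _]mulr_natl rkk.
have -> : - ((N.+1)%:R * (eps2 * (rr * rr ^+ k))) +
  (eps1 * (rr ^+ k - rr * rr ^+ k) + eps2 * (rr * rr ^+ k)) =
  rr ^+ k * (eps1 - rr * (eps1 + (N.+1)%:R * eps2)) + eps2 * (rr * rr ^+ k) by ring.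
rewrite rr_eq.
have h3 : 0 <= eps2 * (rr * rr ^+ k).
  have e2 : 0 <= eps2 := le_trans (ltW e1) e12.
  by rewrite mulr_ge0 // mulr_ge0 // ltW.
have e1' := e1.
move: h3 rkN rk0 e1'; generalize (eps2 * (rr * rr ^+ k)) (rr ^+ N) (rr ^+ k) => u v w.
move=> *; nra.
Qed.
End G2.

Section Nc.
Variable R : rcfType.
Local Notation C := (R[i]).
Local Notation rc := (real_complex R).
Lemma normc_ge0 (x : C) : 0 <= normc x.
Proof. by case: x => a b; rewrite /normc sqrtr_ge0. Qed.
Lemma normc_real (k : R) : normc (rc k) = `|k|.
Proof. by rewrite /normc /= expr0n /= addr0 sqrtr_sqr. Qed.
Lemma Re_le_normc (z : C) : complex.Re z <= normc z.
Proof.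
case: z => a b /=; apply: le_trans (ler_norm a) _.
rewrite -sqrtr_sqr; apply: ler_wsqrtr; rewrite lerDl; exact: sqr_ge0.
Qed.
Lemma normc_gt0 (x : C) : x != 0 -> 0 < normc x.
Proof.
move=> xn0; rewrite lt_def normc_ge0 andbT; apply/eqP => /eq0_normc x0.
by rewrite x0 eqxx in xn0.
Qed.
Lemma normc_sum (I : finType) (F : I -> C) :
  normc (\sum_i F i) <= \sum_i normc (F i).
Proof.
elim/big_rec2: _ => [|j y1 y2 _ IH]; first by rewrite normc0.
apply: le_trans (le_normcD _ _) _; exact: lerD.
Qed.
Lemma Re_addR (z : C) (k : R) : complex.Re (z + rc k) = complex.Re z + k.
Proof. by case: z. Qed.
End Nc.

Section D.
Variable R : rcfType.
Local Notation C := (R[i]).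
Local Notation rc := (real_complex R).

Variables (N q : nat) (S : 'M[R]_q) (mu : R) (Ad : 'M[R]_N.+1).

Definition Dg (a : 'I_N.+1) := \sum_l Ad a l.

Lemma eta_entry (W : 'I_N -> 'cV[C]_q) z :
  map_mx rc (\mxblock_(i < N, j < N)
      ((i == j)%:R *: S - (mu * Hmat Ad i j) *: (1%:M : 'M[R]_q))) *m \mxcol_j W j
   = z *: \mxcol_j W j ->
  forall i l, (z + rc (mu * Dg (lift ord0 i))) * W i l 0 =
    \sum_b rc (S l b) * W i b 0 +
    \sum_j rc (mu * Ad (lift ord0 i) (lift ord0 j)) * W j l 0.
Proof.
move=> Hw i l.
rewrite map_mxblock mul_mxblock_mxrow scale_mxcol in Hw.
move/eq_mxcolP/(_ i): Hw.
under eq_bigr => j _ do rewrite map_mxB !map_mxZ map_scalar_mx rmorph1 mulmxBl -!scalemxAl mul1mx.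
rewrite sumrB (bigD1 i) //= eqxx rmorph1 scale1r big1 ?addr0; last first.
  by move=> j /negbTE; rewrite eq_sym => ->; rewrite rmorph0 scale0r.
under eq_bigr => j _ do rewrite /Hmat !mxE -/(Dg _) (inj_eq (@lift_inj _ ord0)) mulrBr mulrA rmorphB scalerBl.
rewrite sumrB (bigD1 i) //= eqxx mulr1 big1 ?addr0; last first.
  by move=> j; rewrite eq_sym => /negbTE ->; rewrite mulr0 mul0r rmorph0 scale0r.
move/matrixP/(_ l 0); rewrite !mxE summxE => h.
rewrite mulrDl -h opprB addrA subrK.
by congr (_ + _); apply: eq_bigr => j _; rewrite !mxE.
Qed.
End D.

Definition sig (R : rcfType) q (S : 'M[R]_q) := \sum_a \sum_b `|S a b|.

Lemma eta_hurwitz (R : rcfType) N q (S : 'M[R]_q) eps1 eps2 mu (Ad : 'M[R]_N.+1) :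
  0 < eps1 -> eps1 <= eps2 -> admissible_graph eps1 eps2 Ad ->
  (sig S + 1) / cc N eps1 eps2 <= mu ->
  hurwitz (\mxblock_(i < N, j < N)
     ((i == j)%:R *: S - (mu * Hmat Ad i j) *: (1%:M : 'M[R]_q))).
Proof.
move=> e1 e12 adm hmu z /eigP [w Hw wn0].
have c0 := cc_gt0 N e1 e12.
have s0 : 0 <= sig S by rewrite /sig sumr_ge0 // => a _; rewrite sumr_ge0.
have hmu' : sig S + 1 <= mu * cc N eps1 eps2 by rewrite -ler_pdivrMr.
have mu0 : 0 <= mu.
  move: hmu' s0 c0; generalize (sig S) (cc N eps1 eps2) => s c h1 h2 h3; nra.
have [g [g0 gP]] := graph_bound e1 e12 adm.
rewrite -[w]submxcolK in Hw wn0.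
have Heq := eta_entry Hw.
move: Heq wn0; set W := submxcol w => Heq wn0.
have [i0 [l0 nz]] : exists i0 l0, W i0 l0 0 != 0.
  have : ~~ [forall i, [forall l, W i l 0 == 0]].
    apply: contra wn0 => /forallP H; apply/eqP/matrixP => k c.
    rewrite [in LHS]mxE [in RHS]mxE (ord1 c).
    by move/forallP: (H (tagnat.sig1 k)) => /(_ (tagnat.sig2 k)) /eqP.
  rewrite negb_forall => /existsP [i0]; rewrite negb_forall => /existsP [l0 h].
  by exists i0, l0.
pose F (p : 'I_N * 'I_q) := normc (W p.1 p.2 0) / g (lift ord0 p.1).
case: (@arg_maxP _ _ _ (i0, l0) xpredT F isT) => [[i l] _ Hmax].
have gpos j : 0 < g (lift ord0 j) /\ g (lift ord0 j) <= 1.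
  by have [] := gP (lift ord0 j); rewrite // eq_sym neq_lift.
have hi : lift ord0 i != ord0 by rewrite eq_sym neq_lift.
have [xi0 xi1 hQ] := gP _ hi.
move: xi0 xi1 hQ; set xi := g (lift ord0 i) => xi0 xi1 hQ.
set M := normc (W i l 0).
have hF j b : normc (W j b 0) * xi <= M * g (lift ord0 j).
  have := Hmax (j, b) isT; rewrite /F /= ler_pdivrMr ?(gpos j).1 //.
  by rewrite mulrAC ler_pdivlMr.
have M0 : 0 < M.
  have := hF i0 l0; have := normc_gt0 nz; have := (gpos i0).1.
  move: xi0; generalize (normc (W i0 l0 0)) (g (lift ord0 i0)) => u v *; nra.
have Ad0 j : 0 <= Ad (lift ord0 i) (lift ord0 j) by case: adm.
have h1a : normc (z + real_complex R (mu * Dg Ad (lift ord0 i))) * M <=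
    sig S * M + \sum_j mu * Ad (lift ord0 i) (lift ord0 j) * normc (W j l 0).
  rewrite /M -normcM Heq; apply: le_trans (le_normcD _ _) _; apply: lerD.
    apply: le_trans (normc_sum _) _.
    have st : \sum_b normc ((S l b)%:C%C * W i b 0) <= \sum_b `|S l b| * M.
      apply: ler_sum => b _; rewrite normcM normc_real ler_wpM2l //.
      by have := hF i b; rewrite ler_pM2r.
    apply: le_trans st _.
    rewrite -mulr_suml ler_wpM2r ?normc_ge0 //.
    rewrite /sig [X in _ <= X](bigD1 l) //= lerDl sumr_ge0 // => a _; exact: sumr_ge0.
  apply: le_trans (normc_sum _) _; apply: ler_sum => j _.
  by rewrite normcM normc_real ger0_norm // mulr_ge0.
have h1b : (\sum_j mu * Ad (lift ord0 i) (lift ord0 j) * normc (W j l 0)) * xi <=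
    mu * M * \sum_j Ad (lift ord0 i) (lift ord0 j) * g (lift ord0 j).
  rewrite mulr_suml mulr_sumr; apply: ler_sum => j _.
  have := hF j l; have := Ad0 j; have := normc_ge0 (W j l 0).
  move: mu0; generalize (normc (W j l 0)) (Ad (lift ord0 i) (lift ord0 j)) (g (lift ord0 j)) => u v t.
  move=> h0 h1 h2 h3.
  have : mu * v * (u * xi) <= mu * v * (M * t) by rewrite ler_wpM2l // mulr_ge0.
  have -> : mu * v * u * xi = mu * v * (u * xi) by ring.
  have -> : mu * M * (v * t) = mu * v * (M * t) by ring.
  by [].
have h2 : \sum_j Ad (lift ord0 i) (lift ord0 j) * g (lift ord0 j) =
    Dg Ad (lift ord0 i) * xi - \sum_l Ad (lift ord0 i) l * (xi - g l).
  rewrite /Dg mulr_suml.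
  under [X in _ = _ - X]eq_bigr => k _ do rewrite mulrBr.
  rewrite sumrB opprB addrC subrK big_ord_recl g0 mulr0 add0r.
  by [].
have h3 : complex.Re z + mu * Dg Ad (lift ord0 i) <= normc (z + real_complex R (mu * Dg Ad (lift ord0 i))).
  by rewrite -Re_addR Re_le_normc.
move: h1a h1b h2 h3 hQ.
set t := normc _. set P := \sum_j _. set Y := \sum_j _. set Q := \sum_l _.
set D := Dg Ad _. set re := complex.Re z. set s := sig S. set c := cc N eps1 eps2.
move=> h1a h1b h2 h3 hQ.
have k1 : t * M * xi <= s * M * xi + mu * M * Y.
  have : t * M * xi <= (s * M + P) * xi by rewrite ler_pM2r.
  rewrite mulrDl; move=> h; apply: le_trans h _; rewrite lerD2l //.
have Mx : 0 < M * xi by rewrite mulr_gt0.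
have k2 : (re + mu * D) * (M * xi) <= t * (M * xi) by rewrite ler_pM2r.
have k3 : (re * xi - s * xi + mu * Q) * M <= 0.
  have e : (re * xi - s * xi + mu * Q) * M =
     (re + mu * D) * (M * xi) - (s * M * xi + mu * M * (D * xi - Q)) by ring.
  rewrite e subr_le0 -h2; apply: le_trans k2 _; by rewrite mulrA.
have k4 : re * xi - s * xi + mu * Q <= 0.
  by move: k3; rewrite pmulr_lle0.
have k5 : mu * c <= mu * Q by rewrite ler_wpM2l.
have k6 : s * xi <= s by rewrite ler_piMr.
have hm : s + 1 <= mu * c := hmu'.
have k7 : re * xi < 0 by lra.
by move: k7; rewrite pmulr_llt0.
Qed.

Section Alg.
Variable R : rcfType.

Lemma alg1 p n m q (A0 : 'M[R]_(p,n)) (B0 : 'M[R]_(p,m)) (P : 'M[R]_m)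
    (K1 : 'M[R]_(m,n)) (Pi : 'M[R]_(n,q)) (K2 : 'M[R]_(m,q)) :
  (A0 + B0 *m (1%:M - P) *m K1) *m Pi + B0 *m P *m (K1 *m Pi + K2) =
  A0 *m Pi + B0 *m (K1 *m Pi + P *m K2).
Proof.
rewrite mulmxDl !mulmxBr !mulmxBl mulmx1 !mulmxDr !mulmxA.
rewrite -!addrA; congr (_ + _); rewrite !addrA; congr (_ + _).
by rewrite subrK.
Qed.

Lemma data_cl n m T q p (X : 'M[R]_(n,T)) (U : 'M[R]_(m,T)) (Ed : 'M[R]_(p,T))
   (V : 'M[R]_(q,T)) D11 E F A B C D (Xp : 'M[R]_(T,n)) :
  consistent X U Ed V D11 E F A B C D -> X *m Xp = 1%:M ->
  (X *m D11 - E *m V) *m Xp = A + B *m (U *m Xp).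
Proof.
move=> [h1 _] hX; rewrite h1 addrK mulmxDl -!mulmxA hX mulmx1 //.
Qed.



Definition star N (e : R) : 'M[R]_N.+1 :=
  \matrix_(k, l) if (k != ord0) && (l == ord0) then e else 0.

Lemma star_adm N eps1 eps2 : 0 < eps1 -> eps1 <= eps2 ->
  admissible_graph eps1 eps2 (star N eps1).
Proof.
move=> e1 e12; split.
- by move=> k l; rewrite mxE; case: ifP => // _; rewrite ltW.
- by move=> k; rewrite mxE andNb.
- by move=> l; rewrite mxE eqxx.
- move=> k; case: (eqVneq k ord0) => [->|kn0]; first exact: connect0.
  by apply: connect1; rewrite /= mxE kn0 eqxx e1.
move=> k l; rewrite mxE.
have -> : \sum_l' star N eps1 k l' = if k != ord0 then eps1 else 0.
  rewrite (bigD1 ord0) //= big1 ?addr0; first by rewrite mxE eqxx andbT.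
  by move=> j jn0; rewrite mxE (negbTE jn0) andbF.
rewrite mxE.
case: (eqVneq k ord0) => [->|kn0] /=.
  by rewrite mulr0 subrr eqxx.
case: (eqVneq k l) => [<-|kl] /=.
  rewrite (negbTE kn0) /= mul1r subr0 => _; by rewrite ger0_norm ?lexx ?e12 ?ltW.
case: (l == ord0); rewrite mul0r sub0r ?oppr0 ?eqxx //.
by rewrite normrN ger0_norm ?lexx ?e12 ?ltW.
Qed.

Lemma cl_hurwitz N q (n m : 'I_N -> nat) (A : forall i, 'M[R]_(n i))
    (B : forall i, 'M[R]_(n i, m i)) K1 K2 (S : 'M[R]_q) mu Ad :
  (forall i, hurwitz (A i + B i *m K1 i)) ->
  hurwitz (\mxblock_(i < N, j < N)
     ((i == j)%:R *: S - (mu * Hmat Ad i j) *: (1%:M : 'M[R]_q))) ->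
  hurwitz (closed_loop A B K1 K2 S mu Ad).
Proof.
move=> hA he z /eigP /reig_block [/reig_diag_out [i /eigP]|/eigP]; [exact: (hA i z) | exact: (he z)].
Qed.

Lemma cl_hurwitz_inv N q (n m : 'I_N -> nat) (A : forall i, 'M[R]_(n i))
    (B : forall i, 'M[R]_(n i, m i)) K1 K2 (S : 'M[R]_q) mu Ad :
  hurwitz (closed_loop A B K1 K2 S mu Ad) -> forall i, hurwitz (A i + B i *m K1 i).
Proof.
move=> h i z /eigP H; apply: (h z); apply/eigP; apply: reig_block_l.
exact: (@reig_diag_in R N n (fun i => A i + B i *m K1 i) i z H).
Qed.

End Alg.

Lemma cons_pert (R : rcfType) p n m T (A0 : 'M[R]_(p,n)) (B0 : 'M[R]_(p,m)) (P : 'M[R]_m)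
    (K1 : 'M[R]_(m,n)) (X : 'M[R]_(n,T)) (U : 'M[R]_(m,T)) :
  P *m (U - K1 *m X) = U - K1 *m X ->
  (A0 + B0 *m (1%:M - P) *m K1) *m X + B0 *m P *m U = A0 *m X + B0 *m U.
Proof.
move=> hP; have := alg1 A0 B0 P K1 X (U - K1 *m X).
by rewrite hP !(addrC (K1 *m X)) !subrK.
Qed.

Unset Implicit Arguments.
Set Strict Implicit.

Theorem theorem5 (R : rcfType) (N p q T : nat) (n m : 'I_N -> nat)
    (X : forall i, 'M[R]_(n i, T)) (U : forall i, 'M[R]_(m i, T))
    (Ed : forall i, 'M[R]_(p, T)) (V : 'M[R]_(q, T)) (D11 : 'M[R]_T)
    (E : forall i, 'M[R]_(n i, q)) (F : forall i, 'M[R]_(p, q)) (S : 'M[R]_q)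
    (eps1 eps2 : R) :
  0 < eps1 -> eps1 <= eps2 ->
  no_stable_eig S ->
  (* exact data: generated by some true system *)
  (exists (A0 : forall i, 'M[R]_(n i)) (B0 : forall i, 'M[R]_(n i, m i))
          (C0 : forall i, 'M[R]_(p, n i)) (D0 : forall i, 'M[R]_(p, m i)),
     forall i, consistent (X i) (U i) (Ed i) V D11 (E i) (F i)
                          (A0 i) (B0 i) (C0 i) (D0 i)) ->
  exists mu0 : R, forall mu : R, mu0 <= mu ->
    (informative X U Ed V D11 E F S eps1 eps2 mu <->
     forall i : 'I_N,
       exists Xp : 'M[R]_(T, n i),
         [/\ X i *m Xp = 1%:M,
             hurwitz ((X i *m D11 - E i *m V) *m Xp) &
             exists M : 'M[R]_(T, q),
               (X i *m D11 - E i *m V) *m M = X i *m M *m S - E i /\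
               (Ed i - F i *m V) *m M = - F i]) /\
    (forall (Xp : forall i, 'M[R]_(T, n i)) (M : forall i, 'M[R]_(T, q)),
       (forall i,
          [/\ X i *m Xp i = 1%:M,
              hurwitz ((X i *m D11 - E i *m V) *m Xp i),
              (X i *m D11 - E i *m V) *m M i = X i *m M i *m S - E i &
              (Ed i - F i *m V) *m M i = - F i]) ->
       gains_work X U Ed V D11 E F S eps1 eps2 mu Xp
         (fun i => (U i - (U i *m Xp i) *m X i) *m M i)).
Proof.
move=> e1 e12 _ [A0 [B0 [C0 [D0 hcons]]]].
exists ((sig S + 1) / cc N eps1 eps2) => mu hmu.
have part2 : forall (Xp : forall i, 'M[R]_(T, n i)) (M : forall i, 'M[R]_(T, q)),
       (forall i,
          [/\ X i *m Xp i = 1%:M,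
              hurwitz ((X i *m D11 - E i *m V) *m Xp i),
              (X i *m D11 - E i *m V) *m M i = X i *m M i *m S - E i &
              (Ed i - F i *m V) *m M i = - F i]) ->
       gains_work X U Ed V D11 E F S eps1 eps2 mu Xp
         (fun i => (U i - (U i *m Xp i) *m X i) *m M i).
  move=> Xp M hP; split; first by move=> i; case: (hP i).
  move=> Ad A B C D adm hc; split.
    apply: (@cl_hurwitz R N q n m A B); last exact: eta_hurwitz e1 e12 adm hmu.
    by move=> i; case: (hP i) => hX hH _ _; rewrite -(data_cl (hc i) hX).
  move=> i; case: (hP i) => hX _ h1 h2; case: (hc i) => c1 c2.
  exists (X i *m M i) => /=.
  have -> : U i *m Xp i *m (X i *m M i) + (U i - U i *m Xp i *m X i) *m M i = U i *m M i.
    by rewrite mulmxBl !mulmxA addrC subrK.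
  split.
    have : X i *m M i *m S = (X i *m D11 - E i *m V) *m M i + E i by rewrite h1 subrK.
    by rewrite c1 addrK mulmxDl -!mulmxA.
  move: h2; rewrite c2 addrK mulmxDl -!mulmxA => h.
  by rewrite h addNr.
split; last exact: part2.
split.
  move=> [Xp [K2 [hX hW]]] i.
  have [hcl _] := hW _ _ _ _ _ (star_adm N e1 e12) hcons.
  exists (Xp i); split => //.
    rewrite (data_cl (hcons i) (hX i)); move=> z hz; exact: (cl_hurwitz_inv hcl hz).
  pose Y j := U j - U j *m Xp j *m X j.
  pose Pf j := Y j *m pinvmx (Y j).
  have PY j : Pf j *m Y j = Y j by rewrite /Pf mulmxKpV ?submx_refl.
  pose A' j := A0 j + B0 j *m (1%:M - Pf j) *m (U j *m Xp j).
  pose B' j := B0 j *m Pf j.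
  pose C' j := C0 j + D0 j *m (1%:M - Pf j) *m (U j *m Xp j).
  pose D' j := D0 j *m Pf j.
  have hc' j : consistent (X j) (U j) (Ed j) V D11 (E j) (F j) (A' j) (B' j) (C' j) (D' j).
    case: (hcons j) => c1 c2; split.
      by rewrite c1 /A' /B' cons_pert.
    by rewrite c2 /C' /D' cons_pert.
  have [_ hreg] := hW _ A' B' C' D' (star_adm N e1 e12) hc'.
  have [Pi [r1 r2]] := hreg i.
  exists (Xp i *m Pi + (1%:M - Xp i *m X i) *m (pinvmx (Y i) *m K2 i)).
  have XM : X i *m (Xp i *m Pi + (1%:M - Xp i *m X i) *m (pinvmx (Y i) *m K2 i)) = Pi.
    rewrite mulmxDr (mulmxA (X i)) hX mul1mx (mulmxA (X i)) mulmxBr mulmx1.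
    by rewrite (mulmxA (X i)) hX mul1mx subrr mul0mx addr0.
  have UM : U i *m (Xp i *m Pi + (1%:M - Xp i *m X i) *m (pinvmx (Y i) *m K2 i)) =
     U i *m Xp i *m Pi + Pf i *m K2 i.
    rewrite mulmxDr (mulmxA (U i)); congr (_ + _).
    by rewrite /Pf -(mulmxA (Y i)) (mulmxA (U i)) mulmxBr mulmx1 (mulmxA (U i)).
  case: (hcons i) => c1 c2.
  split.
    rewrite c1 addrK mulmxDl -(mulmxA (A0 i)) -(mulmxA (B0 i)) XM UM -alg1 r1 addrK.
    by [].
  move: r2; rewrite c2 addrK mulmxDl -(mulmxA (C0 i)) -(mulmxA (D0 i)) XM UM -alg1.
  by move/eqP; rewrite eq_sym addr_eq0 => /eqP.
move=> hall.
have [Xp hXp] := fin_all_exists hall.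
have [M hM] : exists M : forall i, 'M[R]_(T, q), forall i,
   (X i *m D11 - E i *m V) *m M i = X i *m M i *m S - E i /\
   (Ed i - F i *m V) *m M i = - F i.
  apply: (@fin_all_exists _ (fun=> 'M[R]_(T, q)) (fun i M =>
    (X i *m D11 - E i *m V) *m M = X i *m M *m S - E i /\
    (Ed i - F i *m V) *m M = - F i)) => i.
  by case: (hXp i).
exists Xp, (fun i => (U i - (U i *m Xp i) *m X i) *m M i).
apply: part2 => i; case: (hXp i) => h1 h2 _; case: (hM i) => h3 h4; by split.
Qed.
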